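(* Let $t$ be a positive rational number and let $G$ be a minimally $t$-tough split graph whose vertex set is partitioned into a clique $C$ and an independent set $I$. Let $e=uv$ be an edge with $u,v\in C$, and let $S\subseteq V(G)$ be a witness set for $e$ (in the sense defined in the context). Then \[ S=\big(C\setminus\{u,v\}\big)\cup\{w\in I \mid uw\in E(G),\ vw\in E(G)\}. \]
   Context: All graphs are finite, simple and undirected. A graph is split if its vertex set can be partitioned into a clique and an independent set. $\omega(H)$ denotes the number of components of $H$. A cutset of $G$ is a vertex set $S$ with $G-S$ disconnected. For positive real $t$, $G$ is $t$-tough if $\omega(G-S)\le |S|/t$ for every cutset $S$; the toughness $\tau(G)$ is the largest such $t$, with $\tau(K_n)=\infty$ for all $n\ge1$. $G$ is minimally $t$-tough if $\tau(G)=t$ and $\tau(G-e)<t$ for every edge $e$. For a minimally $t$-tough graph $G$ and an edge $e$, a witness set for $e$ is a set $S\subseteq V(G)$ such that either $e$ is a bridge of $G$ and $S=\emptyset$, or $e$ is not a bridge of $G$, $\omega(G-S)\le |S|/t$, $\omega((G-e)-S)>|S|/t$, and $e$ is a bridge in $G-S$. (For every edge of a minimally $t$-tough graph a witness set exists.) *)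

(* Defs.v *)
From mathcomp Require Import all_boot all_order all_algebra.
Set Implicit Arguments. Unset Strict Implicit. Unset Printing Implicit Defensive.
Import Order.TTheory GRing.Theory Num.Theory.
Local Open Scope ring_scope.

Section Graphs.
Variable T : finType.

Definition simple_graph (g : rel T) : Prop := symmetric g /\ irreflexive g.

Definition restr (g : rel T) (A : {set T}) : rel T :=
  fun x y => [&& x \in A, y \in A & g x y].

Definition comps (g : rel T) (A : {set T}) : {set {set T}} :=
  [set [set y in A | connect (restr g A) x y] | x in A].

Definition ncomp (g : rel T) (A : {set T}) : nat := #|comps g A|.

Definition del_edge (g : rel T) (u v : T) : rel T :=
  fun x y => g x y && ~~ (((x == u) && (y == v)) || ((x == v) && (y == u))).

Definition is_cutset (g : rel T) (S : {set T}) : Prop := (1 < ncomp g (~: S))%N.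

Definition tough (g : rel T) (t : rat) : Prop :=
  forall S : {set T}, is_cutset g S -> t * (ncomp g (~: S))%:R <= (#|S|)%:R.

(* tau(G) = t : t is the largest value for which G is t-tough
   (for complete graphs no such t exists, matching tau(K_n) = infinity) *)
Definition toughness_is (g : rel T) (t : rat) : Prop :=
  tough g t /\ forall t' : rat, tough g t' -> t' <= t.

Definition minimally_tough (g : rel T) (t : rat) : Prop :=
  toughness_is g t /\
  forall u v, g u v -> exists t0 : rat, toughness_is (del_edge g u v) t0 /\ t0 < t.

Definition is_bridge (g : rel T) (A : {set T}) (u v : T) : bool :=
  [&& u \in A, v \in A, g u v & (ncomp g A < ncomp (del_edge g u v) A)%N].

Definition witness_set (g : rel T) (t : rat) (u v : T) (S : {set T}) : Prop :=
  (is_bridge g setT u v /\ S = set0) \/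
  [/\ ~~ is_bridge g setT u v,
      t * (ncomp g (~: S))%:R <= (#|S|)%:R,
      (#|S|)%:R < t * (ncomp (del_edge g u v) (~: S))%:R
    & is_bridge g (~: S) u v].

Definition is_clique (g : rel T) (C : {set T}) : Prop :=
  forall x y, x \in C -> y \in C -> x != y -> g x y.

Definition is_independent (g : rel T) (I : {set T}) : Prop :=
  forall x y, x \in I -> y \in I -> ~~ g x y.

Definition split_partition (g : rel T) (C I : {set T}) : Prop :=
  [/\ C :&: I = set0, C :|: I = setT, is_clique g C & is_independent g I].

End Graphs.

(* Main.v *)
Require Import Defs.
From mathcomp Require Import all_boot all_order all_algebra.
Import Order.TTheory GRing.Theory Num.Theory.
Local Open Scope ring_scope.

Set Implicit Arguments.
Section Aux.
Variable T : finType.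
Implicit Types (g : rel T).

Lemma restr_sym (g : rel T) A : symmetric g -> symmetric (restr g A).
Proof. by move=> sg x y; rewrite /restr sg andbCA. Qed.

Lemma del_sym (g : rel T) u v : symmetric g -> symmetric (del_edge g u v).
Proof.
move=> sg x y; rewrite /del_edge sg; congr (_ && ~~ _).
by rewrite orbC andbC [X in _ || X]andbC.
Qed.

Lemma connect_map (e1 e2 : rel T) (h : T -> T) :
  (forall a b, e1 a b -> connect e2 (h a) (h b)) ->
  forall a b, connect e1 a b -> connect e2 (h a) (h b).
Proof.
move=> H a b /connectP [p]; elim: p a => [|c p IH] a /=; first by move=> _ ->.
by case/andP => eac pc lb; apply: connect_trans (H _ _ eac) (IH _ pc lb).
Qed.

Lemma ncomp_le (g1 g2 : rel T) (A1 A2 : {set T}) (h : T -> T) :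
  symmetric g2 ->
  (forall y, y \in A2 -> exists2 a, a \in A1 & h a = y) ->
  (forall a b, restr g1 A1 a b -> connect (restr g2 A2) (h a) (h b)) ->
  (ncomp g2 A2 <= ncomp g1 A1)%N.
Proof.
move=> s2 surj edg.
pose cs1 := fun x => [set y in A1 | connect (restr g1 A1) x y].
pose cs2 := fun x => [set y in A2 | connect (restr g2 A2) x y].
have sr2 : connect_sym (restr g2 A2) by apply: sym_connect_sym; apply: restr_sym.
have ceq : forall a b, connect (restr g2 A2) a b -> cs2 a = cs2 b.
  move=> a b ab; apply/setP=> z; rewrite !inE; congr (_ && _); apply/idP/idP => H.
    by apply: connect_trans H; rewrite sr2.
  by apply: connect_trans ab H.
have cm := @connect_map (restr g1 A1) (restr g2 A2) h edg.
pose G := fun K : {set T} => if [pick y in K] is Some y then cs2 (h y) else set0.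
have GE : {in A1, forall a, G (cs1 a) = cs2 (h a)}.
  move=> a aA; rewrite /G; case: pickP => [y yK | H].
    rewrite inE in yK; case/andP: yK => _ ay.
    by rewrite (ceq _ _ (cm _ _ ay)).
  by move: (H a); rewrite inE aA connect0.
rewrite /ncomp /comps.
have sub : [set cs2 x | x in A2] \subset G @: [set cs1 x | x in A1].
  apply/subsetP => K /imsetP [y yA ->]; case: (surj y yA) => a aA <-.
  apply/imsetP; exists (cs1 a); first by apply: imset_f.
  by rewrite GE.
exact: leq_trans (subset_leq_card sub) (leq_imset_card _ _).
Qed.

Lemma bridge_nocommon (g : rel T) A u v w :
  symmetric g -> irreflexive g -> is_bridge g A u v -> w \in A ->
  g u w -> g v w -> False.
Proof.
move=> sg ig /and4P [uA vA guv lt] wA guw gvw.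
have neq : forall a b, g a b -> a != b.
  by move=> a b gab; apply: contraTneq gab => ->; rewrite ig.
have le : (ncomp (del_edge g u v) A <= ncomp g A)%N.
  apply: (@ncomp_le g (del_edge g u v) A A id); first exact: del_sym.
    by move=> y yA; exists y.
  move=> a b /and3P [aA bA gab].
  case E: (((a == u) && (b == v)) || ((a == v) && (b == u))).
    have wu : w != u by rewrite eq_sym neq.
    have wv : w != v by rewrite eq_sym neq.
    have e1 : restr (del_edge g u v) A u w.
      by rewrite /restr uA wA /del_edge guw eqxx (negbTE wv) (negbTE wu) /= andbF.
    have e2 : restr (del_edge g u v) A w v.
      by rewrite /restr vA wA /del_edge sg gvw (negbTE wv) (negbTE wu).
    have cuv : connect (restr (del_edge g u v) A) u v.
      exact: connect_trans (connect1 e1) (connect1 e2).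
    case/orP: E => /andP [/eqP -> /eqP ->] //.
    by rewrite (sym_connect_sym (restr_sym _ (del_sym _ _ sg))).
  by apply: connect1; rewrite /restr aA bA /del_edge gab E.
by move: lt; rewrite ltnNge le.
Qed.

Lemma key (g ge : rel T) (t : rat) (S : {set T}) (x p : T) :
  symmetric g -> irreflexive g -> symmetric ge -> 0 < t -> tough g t ->
  (forall a b, g a b -> a != p -> b != p -> ge a b) ->
  p \notin S -> x \in S ->
  (forall w, w \notin S -> w != p -> ~~ g x w) ->
  (1 < ncomp ge (~: S))%N ->
  (#|S|)%:R < t * (ncomp ge (~: S))%:R -> False.
Proof.
move=> sg ig sge t0 tg gge pS xS xiso n2 lt.
pose S2 := p |: (S :\ x).
have xp : x != p by apply: contraNneq pS => <-.
have cS2 : #|S2| = #|S|.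
  rewrite cardsU1 !inE (negbTE pS) andbF add1n [RHS](cardsD1 x) xS.
  by [].
have inA2 : forall a, (a \in ~: S2) = (a != p) && ((a == x) || (a \notin S)).
  by move=> a; rewrite !inE negb_or negb_and negbK.
have le : (ncomp ge (~:S) <= ncomp g (~:S2))%N.
  apply: (@ncomp_le g _ _ _ (fun y => if y == x then p else y)) => //.
    move=> y; rewrite inE => yS; case: (eqVneq y p) => [->|yp].
      by exists x; rewrite ?inA2 ?eqxx ?xp.
    have yx : y != x by apply: contraNneq yS => ->.
    by exists y; rewrite ?inA2 ?yp ?yS ?orbT // (negbTE yx).
  move=> a b /and3P []; rewrite !inA2 => /andP [ap ax] /andP [bp bx] gab.
  case: (eqVneq a x) => [eax|nax]; case: (eqVneq b x) => [ebx|nbx].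
  - by move: gab; rewrite eax ebx ig.
  - by rewrite (negbTE nbx) /= in bx; move: (xiso b bx bp); rewrite -eax gab.
  - by rewrite (negbTE nax) /= in ax; move: (xiso a ax ap); rewrite -ebx sg gab.
  apply: connect1; rewrite (negbTE nax) /= in ax; rewrite (negbTE nbx) /= in bx.
  by rewrite /restr !inE ax bx gge.
have cut : is_cutset g S2.
  by rewrite /is_cutset; exact: (leq_trans n2 le).
have := tg _ cut; rewrite cS2 => H.
have : t * (ncomp ge (~: S))%:R <= t * (ncomp g (~: S2))%:R.
  by apply: ler_wpM2l; [exact: ltW | rewrite ler_nat].
move=> H2; have := lt_le_trans lt (le_trans H2 H).
by rewrite ltxx.
Qed.

End Aux.

Theorem mainTheorem4 (T : finType) (g : rel T) (t : rat) (C I : {set T})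
  (u v : T) (S : {set T}) :
  simple_graph g -> 0 < t -> minimally_tough g t ->
  split_partition g C I ->
  u \in C -> v \in C -> g u v ->
  witness_set g t u v S ->
  S = (C :\: [set u; v]) :|: [set w in I | g u w && g v w].
Proof.
move=> [sg ig] t0 [[tg _] _] [CI0 CUI cl ind] uC vC guv W.
have common : forall w, w \in (C :\: [set u; v]) :|: [set w in I | g u w && g v w] ->
    g u w && g v w.
  move=> w; rewrite !inE => /orP [/andP [/norP [wu wv] wC]|/andP [_ //]].
  by rewrite !cl // eq_sym.
case: W => [[br ->]|[nbr le1 lt1 br]].
  apply/esym/setP => w; rewrite in_set0; apply/negP => /common /andP [uw vw].
  exact: (bridge_nocommon u v sg ig br (in_setT w) uw vw).
have sup : (C :\: [set u; v]) :|: [set w in I | g u w && g v w] \subset S.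
  apply/subsetP => w /common /andP [uw vw]; apply/negPn/negP => wS.
  have wA : w \in ~: S by rewrite inE.
  exact: (bridge_nocommon u v sg ig br wA uw vw).
apply/eqP; rewrite eqEsubset sup andbT; apply/subsetP => y yS.
case/and4P: br => uA vA _ ltc.
rewrite inE in uA; rewrite inE in vA.
have yu : y != u by apply: contraNneq uA => <-.
have yv : y != v by apply: contraNneq vA => <-.
have : y \in C :|: I by rewrite CUI inE.
rewrite inE => /orP [yC|yI]; first by rewrite !inE negb_or yu yv yC.
have pos : (0 < ncomp g (~: S))%N.
  apply/card_gt0P; exists [set y0 in ~: S | connect (restr g (~: S)) u y0].
  by apply: imset_f; rewrite inE.
have n2 : (1 < ncomp (del_edge g u v) (~: S))%N by exact: leq_ltn_trans pos ltc.
have yIC : y \notin C.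
  apply/negP => yC; have : y \in C :&: I by rewrite inE yC yI.
  by rewrite CI0 inE.
have inS : forall w, w \in C -> w != u -> w != v -> w \in S.
  move=> w wC wu wv; apply: (subsetP sup); by rewrite !inE negb_or wu wv wC.
rewrite !inE yI /= (negbTE yIC) andbF /=.
case guy: (g u y); case gvy: (g v y) => //=.
- apply: False_ind; apply: (key (x:=y) u sg ig (del_sym _ u v sg) t0 tg _ _ _ _ n2 lt1) => //.
  + move=> a b gab au bu; rewrite /del_edge gab (negbTE au) (negbTE bu) /=.
    by rewrite !andbF.
  + move=> w wS wu; case: (boolP (w \in C)) => wC.
      case: (eqVneq w v) => [->|wv]; first by rewrite sg gvy.
      by move: wS; rewrite inS.
    have : w \in C :|: I by rewrite CUI inE.
    by rewrite inE (negbTE wC) /= => wI; apply: ind.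
- apply: False_ind; apply: (key (x:=y) v sg ig (del_sym _ u v sg) t0 tg _ _ _ _ n2 lt1) => //.
  + move=> a b gab av bv; rewrite /del_edge gab (negbTE av) (negbTE bv) /=.
    by rewrite !andbF.
  + move=> w wS wv; case: (boolP (w \in C)) => wC.
      case: (eqVneq w u) => [->|wu]; first by rewrite sg guy.
      by move: wS; rewrite inS.
    have : w \in C :|: I by rewrite CUI inE.
    by rewrite inE (negbTE wC) /= => wI; apply: ind.
- apply: False_ind; apply: (key (x:=y) u sg ig (del_sym _ u v sg) t0 tg _ _ _ _ n2 lt1) => //.
  + move=> a b gab au bu; rewrite /del_edge gab (negbTE au) (negbTE bu) /=.
    by rewrite !andbF.
  + move=> w wS wu; case: (boolP (w \in C)) => wC.
      case: (eqVneq w v) => [->|wv]; first by rewrite sg gvy.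
      by move: wS; rewrite inS.
    have : w \in C :|: I by rewrite CUI inE.
    by rewrite inE (negbTE wC) /= => wI; apply: ind.
Qed.
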